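(* Let $\mathfrak{k}_1\subset\mathbb{C}^{N_1\times N_1}$ and $\mathfrak{k}_2\subset\mathbb{C}^{N_2\times N_2}$ be the (real) Lie algebras of Lie subgroups $K_1,K_2$ of matrices, and let $\mathfrak{t}_1,\mathfrak{t}_2$ be torus algebras of $\mathfrak{k}_1$ and $\mathfrak{k}_2$, respectively. Then $\mathfrak{t}_1\widehat{\oplus}\mathfrak{t}_2$ is a torus algebra of $\mathfrak{k}_1\widehat{\oplus}\mathfrak{k}_2$. If moreover $\mathfrak{k}_1\subset sl_{\mathbb{C}}(N_1)$ and $\mathfrak{k}_2\subset sl_{\mathbb{C}}(N_2)$, then the converse holds: if $\mathfrak{t}_1\subset\mathfrak{k}_1$ and $\mathfrak{t}_2\subset\mathfrak{k}_2$ are Lie subalgebras such that $\mathfrak{t}_1\widehat{\oplus}\mathfrak{t}_2$ is a torus algebra of $\mathfrak{k}_1\widehat{\oplus}\mathfrak{k}_2$, then $\mathfrak{t}_1$ and $\mathfrak{t}_2$ are torus algebras of $\mathfrak{k}_1$ and $\mathfrak{k}_2$.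
   Context: A torus algebra of a Lie algebra is a maximal Abelian subalgebra. For subspaces $\mathfrak{a}_1\subset\mathbb{C}^{N_1\times N_1}$, $\mathfrak{a}_2\subset\mathbb{C}^{N_2\times N_2}$, $\mathfrak{a}_1\widehat{\oplus}\mathfrak{a}_2=\{\Omega_1\otimes I_{N_2}+I_{N_1}\otimes\Omega_2\mid \Omega_1\in\mathfrak{a}_1,\Omega_2\in\mathfrak{a}_2\}$; $\mathfrak{k}_1\widehat{\oplus}\mathfrak{k}_2$ is the Lie algebra of $K_1\otimes K_2=\{U_1\otimes U_2\}$. $sl_{\mathbb{C}}(N)$ is the set of all $A\in\mathbb{C}^{N\times N}$ with $\mathrm{tr}\,A=0$. *)

(* Defs.v *)
From HB Require Import structures.
From mathcomp Require Import all_boot all_order all_algebra.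
From mathcomp Require Import complex mxtens.
Set Implicit Arguments. Unset Strict Implicit. Unset Printing Implicit Defensive.
Import Order.TTheory GRing.Theory Num.Theory.
Local Open Scope ring_scope.

(* Complex numbers are modelled as R[i] for an arbitrary real closed field R
   (R = the reals gives C).  Subsets of matrix spaces are predicates in Prop. *)

Definition mxset (R : rcfType) (N : nat) := 'M[R[i]]_N -> Prop.

Definition mxsubset (R : rcfType) (N : nat) (S T : mxset R N) :=
  forall A, S A -> T A.

Definition real_subspace (R : rcfType) (N : nat) (S : mxset R N) :=
  [/\ S 0,
      (forall A B, S A -> S B -> S (A + B)) &
      (forall (r : R) A, S A -> S ((real_complex R r) *: A))].

Definition lie_bracket (R : rcfType) (N : nat) (A B : 'M[R[i]]_N) :=
  A *m B - B *m A.

Definition lie_subalgebra (R : rcfType) (N : nat) (S : mxset R N) :=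
  real_subspace S /\ (forall A B, S A -> S B -> S (lie_bracket A B)).

Definition abelian_set (R : rcfType) (N : nat) (S : mxset R N) :=
  forall A B, S A -> S B -> lie_bracket A B = 0.

Definition torus_algebra (R : rcfType) (N : nat) (t k : mxset R N) :=
  [/\ lie_subalgebra t, mxsubset t k, abelian_set t &
      (forall t' : mxset R N, lie_subalgebra t' -> abelian_set t' ->
          mxsubset t t' -> mxsubset t' k -> mxsubset t' t)].

Definition hat_sum (R : rcfType) (N1 N2 : nat) (a1 : mxset R N1) (a2 : mxset R N2)
  : mxset R (N1 * N2) :=
  fun M => exists O1 O2, [/\ a1 O1, a2 O2 &
     M = O1 *t (1%:M : 'M[R[i]]_N2) + (1%:M : 'M[R[i]]_N1) *t O2].

Definition in_sl (R : rcfType) (N : nat) (k : mxset R N) :=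
  forall A, k A -> \tr A = 0.

(* Main.v *)
Require Import Defs.
From HB Require Import structures.
From mathcomp Require Import all_boot all_order all_algebra.
From mathcomp Require Import complex mxtens.
From mathcomp Require Import ring.
Local Open Scope ring_scope.
Import Order.TTheory GRing.Theory Num.Theory.

Section H.
Set Implicit Arguments. Unset Strict Implicit.
Variables (R : rcfType) (N1 N2 : nat).
Local Notation C := (R[i]).

Definition hh (A : 'M[C]_N1) (B : 'M[C]_N2) : 'M[C]_(N1 * N2) :=
  A *t (1%:M : 'M[C]_N2) + (1%:M : 'M[C]_N1) *t B.

Lemma hhD A1 A2 B1 B2 : hh A1 A2 + hh B1 B2 = hh (A1 + B1) (A2 + B2).
Proof. apply/matrixP=> i j; rewrite !mxE; ring. Qed.

Lemma hhZ (c : C) A1 A2 : c *: hh A1 A2 = hh (c *: A1) (c *: A2).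
Proof. apply/matrixP=> i j; rewrite !mxE; ring. Qed.

Lemma hh0 : hh 0 0 = 0.
Proof. apply/matrixP=> i j; rewrite !mxE; ring. Qed.

Lemma hh_br A1 A2 B1 B2 :
  lie_bracket (hh A1 A2) (hh B1 B2) = hh (lie_bracket A1 B1) (lie_bracket A2 B2).
Proof.
rewrite /lie_bracket /hh !mulmxDl !mulmxDr !tensmx_mul !mulmx1 !mul1mx.
apply/matrixP=> i j; rewrite !mxE; ring.
Qed.

Lemma zl (V : zmodType) (a b c d : V) : a + b = c + d -> a - c = d - b.
Proof. by move=> E; rewrite -(addrK b a) E addrAC [c + d]addrC addrK. Qed.

Lemma hh_eq A B C' D : hh A B = hh C' D ->
  (A - C') *t (1%:M : 'M[C]_N2) = (1%:M : 'M[C]_N1) *t (D - B).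
Proof.
move=> /zl E.
have -> : (A - C') *t (1%:M : 'M[C]_N2) = A *t (1%:M : 'M[C]_N2) - C' *t (1%:M : 'M[C]_N2).
  by apply/matrixP=> i j; rewrite !mxE; ring.
rewrite E; apply/matrixP=> i j; rewrite !mxE; ring.
Qed.

Lemma tens1_inj (A : 'M[C]_N1) : (0 < N2)%N -> A *t (1%:M : 'M[C]_N2) = 0 -> A = 0.
Proof.
move=> n2 /matrixP H; apply/matrixP=> i k.
have := H (mxtens_index (i, Ordinal n2)) (mxtens_index (k, Ordinal n2)).
by rewrite tensmxE !mxE eqxx mulr1.
Qed.

Lemma tens1_inj' (A : 'M[C]_N2) : (0 < N1)%N -> (1%:M : 'M[C]_N1) *t A = 0 -> A = 0.
Proof.
move=> n1 /matrixP H; apply/matrixP=> i k.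
have := H (mxtens_index (Ordinal n1, i)) (mxtens_index (Ordinal n1, k)).
by rewrite tensmxE !mxE eqxx mul1r.
Qed.



Lemma tens_scal (D : 'M[C]_N1) (E : 'M[C]_N2) (i0 : 'I_N1) (k0 : 'I_N2) :
  D *t (1%:M : 'M[C]_N2) = (1%:M : 'M[C]_N1) *t E ->
  D = (D i0 i0)%:M /\ E = (D i0 i0)%:M.
Proof.
move/matrixP=> H.
have H' i i' k k' : D i i' * (k == k')%:R = (i == i')%:R * E k k'.
  by have := H (mxtens_index (i, k)) (mxtens_index (i', k')); rewrite !tensmxE !mxE.
split; apply/matrixP=> i j; rewrite mxE.
  have := H' i j k0 k0; rewrite eqxx mulr1 => ->.
  case: (i =P j) => _; last by rewrite mul0r mulr0n.
  by have := H' i0 i0 k0 k0; rewrite !eqxx mulr1 mul1r mulr1n => ->.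
have := H' i0 i0 i j; rewrite eqxx mul1r => <-.
by case: (i =P j) => _; rewrite ?mulr1 ?mulr0 ?mulr1n ?mulr0n.
Qed.

Lemma tens_scal0 (D : 'M[C]_N1) (E : 'M[C]_N2) : (0 < N1)%N -> (0 < N2)%N ->
  D *t (1%:M : 'M[C]_N2) = (1%:M : 'M[C]_N1) *t E ->
  (\tr D = 0 \/ \tr E = 0) -> D = 0 /\ E = 0.
Proof.
move=> n1 n2 H Htr.
have [HD HE] := tens_scal (Ordinal n1) (Ordinal n2) H.
move: HD HE; set d := D _ _ => HD HE.
suff d0 : d = 0 by rewrite HD HE d0; split; apply/matrixP=> i j; rewrite !mxE mul0rn.
move: Htr; rewrite HD HE !mxtrace_scalar.
by case=> /eqP; rewrite mulrn_eq0 ?eqn0Ngt ?n1 ?n2 /= => /eqP.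
Qed.

Lemma mx_triv : (N1 = 0 \/ N2 = 0)%N -> forall M M' : 'M[C]_(N1 * N2), M = M'.
Proof.
move=> h M M'; apply/matrixP=> i; have := ltn_ord i.
have E : (N1 * N2 = 0)%N by case: h => ->; rewrite ?muln0 ?mul0n.
by rewrite [X in (_ < X)%N -> _]E.
Qed.


Definition hat := @hat_sum R N1 N2.

Lemma hh_in (a1 : mxset R N1) (a2 : mxset R N2) A B : a1 A -> a2 B -> hat_sum a1 a2 (hh A B).
Proof. by move=> hA hB; exists A, B. Qed.

Lemma br0 (N : nat) (A : 'M[C]_N) : lie_bracket A 0 = 0.
Proof. by rewrite /lie_bracket mulmx0 mul0mx subrr. Qed.

Lemma br0l (N : nat) (A : 'M[C]_N) : lie_bracket 0 A = 0.
Proof. by rewrite /lie_bracket mulmx0 mul0mx subrr. Qed.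

Lemma hat_lie (a1 : mxset R N1) (a2 : mxset R N2) :
  lie_subalgebra a1 -> lie_subalgebra a2 -> lie_subalgebra (hat_sum a1 a2).
Proof.
move=> [[z0 zD zZ] zB] [[w0 wD wZ] wB]; split; [split|].
- by exists 0, 0; split => //; rewrite tens0mx tensmx0 addr0.
- move=> _ _ [A1 [A2 [hA1 hA2 ->]]] [B1 [B2 [hB1 hB2 ->]]].
  exists (A1 + B1), (A2 + B2); split; auto; exact: hhD.
- move=> r _ [A1 [A2 [hA1 hA2 ->]]].
  exists (real_complex R r *: A1), (real_complex R r *: A2); split; auto; exact: hhZ.
- move=> _ _ [A1 [A2 [hA1 hA2 ->]]] [B1 [B2 [hB1 hB2 ->]]].
  exists (lie_bracket A1 B1), (lie_bracket A2 B2); split; auto; exact: hh_br.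
Qed.

Lemma hat_ab (a1 : mxset R N1) (a2 : mxset R N2) :
  abelian_set a1 -> abelian_set a2 -> abelian_set (hat_sum a1 a2).
Proof.
move=> h1 h2 _ _ [A1 [A2 [hA1 hA2 ->]]] [B1 [B2 [hB1 hB2 ->]]].
change (lie_bracket (hh A1 A2) (hh B1 B2) = 0).
by rewrite hh_br h1 // h2 // hh0.
Qed.

Lemma hat_sub (a1 b1 : mxset R N1) (a2 b2 : mxset R N2) :
  mxsubset a1 b1 -> mxsubset a2 b2 -> mxsubset (hat_sum a1 a2) (hat_sum b1 b2).
Proof.
move=> s1 s2 _ [A1 [A2 [hA1 hA2 ->]]]; exists A1, A2; split; auto.
Qed.
End H.

Section G.
Set Implicit Arguments. Unset Strict Implicit.
Variables (R : rcfType) (N : nat).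
Local Notation C := (R[i]).

Definition comm (A B : 'M[C]_N) := A *m B = B *m A.

Lemma commDl A B D : comm A D -> comm B D -> comm (A + B) D.
Proof. by rewrite /comm mulmxDl mulmxDr => -> ->. Qed.

Lemma commZl (x : C) A D : comm A D -> comm (x *: A) D.
Proof. by rewrite /comm => h; rewrite -scalemxAl h scalemxAr. Qed.

Lemma comm_sym A B : comm A B -> comm B A.
Proof. by []. Qed.

Lemma commE A B : lie_bracket A B = 0 <-> comm A B.
Proof. by rewrite /lie_bracket /comm; split => [/eqP|->]; rewrite ?subr_eq0 ?subrr // => /eqP. Qed.

Lemma absorb (t k : mxset R N) O : torus_algebra t k -> real_subspace k -> k O ->
  (forall a, t a -> lie_bracket O a = 0) -> t O.
Proof.
move=> [lt st abt mt] [k0 kD kZ] kO hO.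
have [[t0 tD tZ] tB] := lt.
pose t2 : mxset R N := fun X => exists a r, t a /\ X = a + real_complex R r *: O.
have cO a : t a -> comm a O by move=> ta; apply/comm_sym/commE/hO.
have ab2 : abelian_set t2.
  move=> _ _ [a [r [ta ->]]] [b [s [tb ->]]]; apply/commE.
  apply: commDl; apply: comm_sym; apply: commDl.
  - exact/commE/abt.
  - exact: commZl (comm_sym (cO a ta)).
  - exact: comm_sym (commZl _ (comm_sym (cO b tb))).
  - exact: commZl _ (comm_sym (commZl _ (erefl _))).
apply: (mt t2) => //.
- split; [split|].
  + by exists 0, 0; split => //; rewrite rmorph0 scale0r addr0.
  + move=> _ _ [a [r [ta ->]]] [b [s [tb ->]]].
    exists (a + b), (r + s); split; first exact: tD.
    by rewrite rmorphD scalerDl addrACA.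
  + move=> c _ [a [r [ta ->]]].
    exists (real_complex R c *: a), (c * r); split; first exact: tZ.
    by rewrite scalerDr scalerA rmorphM.
  + move=> X Y hX hY; rewrite ab2 //.
    by exists 0, 0; split => //; rewrite rmorph0 scale0r addr0.
- by move=> a ta; exists a, 0; split => //; rewrite rmorph0 scale0r addr0.
- move=> _ [a [r [ta ->]]]; apply: kD; [exact: st | exact: kZ].
- by exists 0, 1; split => //; rewrite rmorph1 scale1r add0r.
Qed.

End G.

Unset Implicit Arguments.
Theorem lemma3p2 (R : rcfType) (N1 N2 : nat) (k1 : mxset R N1) (k2 : mxset R N2) :
  lie_subalgebra k1 -> lie_subalgebra k2 ->
  (forall (t1 : mxset R N1) (t2 : mxset R N2),
      torus_algebra t1 k1 -> torus_algebra t2 k2 ->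
      torus_algebra (hat_sum t1 t2) (hat_sum k1 k2)) /\
  ((0 < N1)%N -> (0 < N2)%N -> in_sl k1 -> in_sl k2 ->
   forall (t1 : mxset R N1) (t2 : mxset R N2),
      lie_subalgebra t1 -> mxsubset t1 k1 ->
      lie_subalgebra t2 -> mxsubset t2 k2 ->
      torus_algebra (hat_sum t1 t2) (hat_sum k1 k2) ->
      torus_algebra t1 k1 /\ torus_algebra t2 k2).
Proof.
move=> hk1 hk2; split.
  move=> t1 t2 T1 T2.
  have [lt1 st1 at1 mt1] := T1; have [lt2 st2 at2 mt2] := T2.
  have [[t10 _ _] _] := lt1; have [[t20 _ _] _] := lt2.
  split.
  - exact: hat_lie.
  - exact: hat_sub.
  - exact: hat_ab.
  move=> t' lt' at' sub1 sub2 M tM.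
  have [O1 [O2 [kO1 kO2 EM]]] := sub2 M tM.
  rewrite EM in tM *; change (hat_sum t1 t2 (hh O1 O2)).
  change (t' (hh O1 O2)) in tM.
  have [n10|n1] := posnP N1.
    by rewrite (@mx_triv R N1 N2 (or_introl n10) (hh O1 O2) (hh 0 0)); apply: hh_in.
  have [n20|n2] := posnP N2.
    by rewrite (@mx_triv R N1 N2 (or_intror n20) (hh O1 O2) (hh 0 0)); apply: hh_in.
  apply: hh_in.
    apply: (absorb T1 hk1.1 kO1) => a ta.
    have := at' _ _ tM (sub1 _ (hh_in ta t20)).
    rewrite hh_br br0 /hh tensmx0 addr0; exact: tens1_inj.
  apply: (absorb T2 hk2.1 kO2) => a ta.
  have := at' _ _ tM (sub1 _ (hh_in t10 ta)).
  rewrite hh_br br0 /hh tens0mx add0r; exact: tens1_inj'.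
move=> n1 n2 sl1 sl2 t1 t2 lt1 st1 lt2 st2 [ltt stt att mtt].
have [[t10 _ _] _] := lt1; have [[t20 _ _] _] := lt2.
have at1 : abelian_set t1.
  move=> A B tA tB; have := att _ _ (hh_in tA t20) (hh_in tB t20).
  rewrite hh_br br0 /hh tensmx0 addr0; exact: tens1_inj.
have at2 : abelian_set t2.
  move=> A B tA tB; have := att _ _ (hh_in t10 tA) (hh_in t10 tB).
  rewrite hh_br br0 /hh tens0mx add0r; exact: tens1_inj'.
split; split => //.
  move=> t' lt' at' s1 s2 X tX.
  have sub := mtt (hat_sum t' t2) (hat_lie lt' lt2) (hat_ab at' at2)
    (hat_sub s1 (fun A h => h)) (hat_sub s2 st2).
  have [O1 [O2 [tO1 tO2 E]]] := sub _ (hh_in tX t20).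
  have := @hh_eq R N1 N2 _ _ O1 O2 E; rewrite subr0 => H.
  have [D0 _] := tens_scal0 n1 n2 H (or_intror (sl2 _ (st2 _ tO2))).
  by rewrite (subr0_eq D0).
move=> t' lt' at' s1 s2 X tX.
have sub := mtt (hat_sum t1 t') (hat_lie lt1 lt') (hat_ab at1 at')
  (hat_sub (fun A h => h) s1) (hat_sub st1 s2).
have [O1 [O2 [tO1 tO2 E]]] := sub _ (hh_in t10 tX).
have := @hh_eq R N1 N2 _ _ O1 O2 E => H.
have tr0 : \tr (0 - O1) = 0 by rewrite sub0r raddfN /= sl1 ?oppr0 //; exact: st1.
have [_ D0] := tens_scal0 n1 n2 H (or_introl tr0).
by rewrite -(subr0_eq D0).
Qed.
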